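(* For every positive integer $t$ there exists a constant $C=C(t)$ with the following property. Let $G$ be a bipartite graph containing no copy of $\theta_{3,t}[2]$, let $z_1,z_2$ be distinct vertices of $G$, and let $\ell=|N(z_1,z_2)|$. Let $R=\{v\in V(G)\setminus\{z_1,z_2\}: d(v,z_1,z_2)\ge C\ell^{1/2}\}$. Then the number of triples $(z',w_1,w_2)$ of distinct vertices with $z'\in R$ and $w_1,w_2\in N(z',z_1,z_2)$ is at most $C\ell^2$.
   Context: For vertices $v_1,\dots,v_k$ of a graph, $N(v_1,\dots,v_k)$ denotes their common neighbourhood and $d(v_1,\dots,v_k)=|N(v_1,\dots,v_k)|$. The theta graph $\theta_{3,t}$ is the union of $t$ paths of length $3$ sharing the same two endpoints and pairwise internally vertex-disjoint; $F[2]$ is obtained from a graph $F$ by replacing each vertex by an independent set of size $2$ and each edge by a copy of $K_{2,2}$ between the corresponding sets. *)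

(* Defs.v *)
From mathcomp Require Import all_boot all_order.
Set Implicit Arguments. Unset Strict Implicit. Unset Printing Implicit Defensive.

Definition simple_graph (T : finType) (e : rel T) : Prop :=
  symmetric e /\ irreflexive e.

Definition bipartite (T : finType) (e : rel T) : Prop :=
  exists c : T -> bool, forall x y, e x y -> c x != c y.

Definition has_copy (V : Type) (h : rel V) (T : finType) (e : rel T) : Prop :=
  exists f : V -> T, injective f /\ forall x y, h x y -> e (f x) (f y).

(* F[2]: each vertex replaced by an independent pair, each edge by K_{2,2}. *)
Definition blowup2 (V : Type) (h : rel V) : rel (V * bool) :=
  fun p q => h p.1 q.1.

(* theta_{3,t}: endpoints inl false (=a), inl true (=b); internal vertices
   inr (i,false) (=x_i, adjacent to a) and inr (i,true) (=y_i, adjacent to b);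
   paths a - x_i - y_i - b for i < t. *)
Definition theta_vert (t : nat) : Type := (bool + ('I_t * bool))%type.

Definition theta3_adj (t : nat) : rel (theta_vert t) :=
  fun u v =>
    match u, v with
    | inl b, inr (_, c) => b == c
    | inr (_, c), inl b => b == c
    | inr (i, c), inr (j, d) => (i == j) && (c != d)
    | inl _, inl _ => false
    end.

Definition theta3_2 (t : nat) : rel (theta_vert t * bool) :=
  blowup2 (@theta3_adj t).

Definition cnbr2 (T : finType) (e : rel T) (a b : T) : {set T} :=
  [set w | e a w && e b w].
Definition cnbr3 (T : finType) (e : rel T) (a b c : T) : {set T} :=
  [set w | [&& e a w, e b w & e c w]].

(* Main.v *)
Require Import Defs.
From mathcomp Require Import all_boot all_order.
From mathcomp Require Import zify.
Set Implicit Arguments. Unset Strict Implicit. Unset Printing Implicit Defensive.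

Lemma cauchy_nat (T : finType) (A : {set T}) (f : T -> nat) :
  (forall i, i \notin A -> f i = 0) ->
  (\sum_i f i) ^ 2 <= #|A| * \sum_i (f i) ^ 2.
Proof.
move=> fA.
have E : forall g : T -> nat, (forall i, i \notin A -> g i = 0) ->
   \sum_i g i = \sum_(i in A) g i.
  move=> g gA; rewrite [RHS]big_mkcond /=; apply: eq_bigr => i _.
  by case: ifP => // /negbT /gA.
rewrite (E f fA) (E (fun i => f i ^ 2)); last by move=> i /fA ->.
have -> : (\sum_(i in A) f i) ^ 2 = \sum_(i in A) \sum_(j in A) f i * f j.
  by rewrite expnS expn1 big_distrl /=; apply: eq_bigr => i _; rewrite big_distrr.
set X := \sum_(i in A) f i ^ 2.
suff H2 : 2 * (\sum_(i in A) \sum_(j in A) f i * f j) <= 2 * (#|A| * X).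
  by rewrite leq_pmul2l in H2.
apply: (@leq_trans (\sum_(i in A) \sum_(j in A) (f i ^ 2 + f j ^ 2))).
  rewrite big_distrr /=; apply: leq_sum => i _; rewrite big_distrr /=.
  apply: leq_sum => j _.
  case: (nat_Cauchy (f i) (f j)) => H _; nia.
have -> : \sum_(i in A) \sum_(j in A) (f i ^ 2 + f j ^ 2) =
          \sum_(i in A) (#|A| * f i ^ 2 + X).
  apply: eq_bigr => i _; rewrite big_split /= sum_nat_const; congr (_ + _).
rewrite big_split /= -big_distrr /= sum_nat_const -/X.
nia.
Qed.

Lemma card_sumb (T : finType) (A : {set T}) : #|A| = \sum_x (x \in A : nat).
Proof. by rewrite -sum1_card big_mkcond; apply: eq_bigr => x _; case: (x \in A). Qed.

Lemma sum4_swap (T : finType) (F : T -> T -> T -> T -> nat) :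
  \sum_x \sum_y \sum_z \sum_w F x y z w = \sum_z \sum_w \sum_x \sum_y F x y z w.
Proof.
under eq_bigr => x _ do rewrite exchange_big.
under eq_bigr => x _ do under eq_bigr => z _ do rewrite exchange_big.
rewrite exchange_big; apply: eq_bigr => z _; by rewrite exchange_big.
Qed.

Lemma bsq (b : bool) : (b : nat) * b = b. Proof. by case: b. Qed.

Definition Ind (T : finType) (R : {set T}) (S : T -> {set T}) z x : nat :=
  (z \in R) && (x \in S z).
Definition cc (T : finType) R S (x y : T) := \sum_z Ind R S z x * Ind R S z y.
Definition kk (T : finType) R S (z w : T) := \sum_x Ind R S z x * Ind R S w x.
Definition WW (T : finType) R S (x : T) := \sum_y (x != y) * cc R S x y.
Definition NN (T : finType) R S := \sum_x @WW T R S x.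
Definition dg (T : finType) R S (x : T) := \sum_z Ind R S z x.

Lemma step_b (T : finType) R S :
  \sum_x \sum_y ((x != y) * @cc T R S x y) ^ 2 =
  NN R S + \sum_x \sum_y (x != y) * \sum_z \sum_w (z != w) *
      (Ind R S z x * Ind R S z y * (Ind R S w x * Ind R S w y)).
Proof.
rewrite /NN /WW -big_split /=; apply: eq_bigr => x _.
rewrite -big_split /=; apply: eq_bigr => y _.
rewrite expnMn expnS expn1 (bsq (x != y)). rewrite -mulnDr; congr (_ * _).
rewrite /cc expnS expn1 big_distrl /= -big_split /=; apply: eq_bigr => z _.
rewrite big_distrr /= (bigD1 z) //=; congr (_ + _).
 by rewrite /Ind; case: (z \in R); case: (x \in S z); case: (y \in S z).
rewrite big_mkcond /=; apply: eq_bigr => w _.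
by rewrite eq_sym; case: (z != w); rewrite ?mul1n ?mul0n.
Qed.

Lemma step_D (T : finType) R S (m t : nat) :
  (forall x y : T, x != y ->
     \sum_z \sum_w (z != w) * (m <= kk R S z w) *
        (Ind R S z x * Ind R S z y * (Ind R S w x * Ind R S w y))
     <= 4 * t * cc R S x y) ->
  \sum_x \sum_y (x != y) * \sum_z \sum_w (z != w) *
      (Ind R S z x * Ind R S z y * (Ind R S w x * Ind R S w y))
  <= 4 * t * NN R S + (m - 1) * \sum_x dg R S x ^ 2.
Proof.
move=> hforb.
set Q := fun x y z w => Ind R S z x * Ind R S z y * (Ind R S w x * Ind R S w y).
apply: (@leq_trans (\sum_x \sum_y ((x != y) * \sum_z \sum_w (z != w) * (m <= kk R S z w) * Q x y z w
    + \sum_z \sum_w (kk R S z w < m) * Q x y z w))).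
  apply: leq_sum => x _; apply: leq_sum => y _.
  apply: (@leq_trans ((x != y) * \sum_z \sum_w (z != w) * (m <= kk R S z w) * Q x y z w
    + (x != y) * \sum_z \sum_w (kk R S z w < m) * Q x y z w)).
    rewrite -mulnDr leq_mul2l; apply/orP; right.
    rewrite -big_split /=; apply: leq_sum => z _; rewrite -big_split /=; apply: leq_sum => w _.
    rewrite /Q; case: (z != w); case: (leqP m (kk R S z w)) => _ /=; lia.
  by rewrite leq_add2l; case: (x != y); rewrite ?mul1n ?mul0n.
under eq_bigr => x _ do rewrite big_split /=.
rewrite big_split /=; apply: leq_add.
  rewrite /NN /WW big_distrr /=; apply: leq_sum => x _; rewrite big_distrr /=.
  apply: leq_sum => y _.
  case: eqP => [_|/eqP nxy] /=; first by rewrite !mul0n.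
  by rewrite !mul1n; exact: (hforb x y nxy).
rewrite (sum4_swap (fun x y z w => (kk R S z w < m) * Q x y z w)) /=.
apply: (@leq_trans (\sum_z \sum_w (m - 1) * kk R S z w)).
  apply: leq_sum => z _; apply: leq_sum => w _.
  under eq_bigr => x _ do rewrite -big_distrr /=.
  rewrite -big_distrr /=.
  have -> : \sum_x \sum_y Q x y z w = kk R S z w * kk R S z w.
    rewrite /kk big_distrl /=; apply: eq_bigr => x _; rewrite big_distrr /=.
    by apply: eq_bigr => y _; rewrite /Q mulnACA.
  case: ltnP => h; last by rewrite mul0n.
  rewrite mul1n; nia.
under eq_bigr => z _ do rewrite -big_distrr /=.
rewrite -big_distrr /= leq_mul2l; apply/orP; right.
rewrite /dg /kk.
under eq_bigr => z _ do rewrite exchange_big /=.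
rewrite exchange_big /=; apply: eq_leq; apply: eq_bigr => x _.
rewrite expnS expn1 big_distrl /=; apply: eq_bigr => z _; by rewrite big_distrr.
Qed.

Lemma sq_sum (T : finType) (f : T -> nat) :
  (\sum_z f z) ^ 2 = \sum_z \sum_w f z * f w.
Proof. by rewrite expnS expn1 big_distrl /=; apply: eq_bigr => z _; rewrite big_distrr. Qed.

Lemma step_f (T : finType) (R L : {set T}) (S : T -> {set T}) (C : nat) (x : T) :
  (forall z, S z \subset L) ->
  (forall z, z \in R -> C ^ 2 * #|L| <= #|S z| ^ 2) -> 2 <= C ->
  C ^ 2 * #|L| * dg R S x ^ 2 <= 4 * WW R S x ^ 2.
Proof.
move=> hS hbig hC.
have H1 : \sum_z Ind R S z x * #|S z| <= 2 * WW R S x.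
  have -> : WW R S x = \sum_z Ind R S z x * \sum_y (x != y) * Ind R S z y.
    rewrite /WW /cc.
    under eq_bigr => y _ do rewrite big_distrr /=.
    rewrite exchange_big /=; apply: eq_bigr => z _; rewrite big_distrr /=.
    by apply: eq_bigr => y _; rewrite mulnCA.
  rewrite big_distrr /=; apply: leq_sum => z _.
  rewrite /Ind; case Hz: (z \in R) => //=; case Hx: (x \in S z) => //=.
  rewrite !mul1n.
  have E : #|S z| = (\sum_y (x != y) * (y \in S z)) + 1.
    rewrite card_sumb (bigD1 x) //= addnC; congr (_ + _); last by rewrite Hx.
    rewrite big_mkcond /=; apply: eq_bigr => y _; rewrite eq_sym.
    by case: (x != y); rewrite ?mul1n.
  have hL : 0 < #|L| by apply/card_gt0P; exists x; apply: (subsetP (hS z)).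
  have := hbig z Hz.
  rewrite E; set r := \sum_y _ => h.
  have h4 : 4 <= C ^ 2 * #|L|.
    apply: (@leq_trans (2 ^ 2 * 1)) => //; apply: leq_mul => //; by rewrite leq_sqr.
  case: r h => [|r] h; last by lia.
  by have := leq_trans h4 h.
have H2 : C ^ 2 * #|L| * dg R S x ^ 2 <= (\sum_z Ind R S z x * #|S z|) ^ 2.
  rewrite /dg !sq_sum big_distrr /=; apply: leq_sum => z _.
  rewrite big_distrr /=; apply: leq_sum => w _.
  rewrite /Ind; case Hz: (z \in R) => //=; case Hx: (x \in S z) => //=;
    rewrite ?muln0 ?mul0n //.
  case Hw: (w \in R) => //=; case Hx': (x \in S w) => //=; rewrite ?muln0 ?mul0n //.
  rewrite !mul1n muln1.
  have h1 := hbig z Hz; have h2 := hbig w Hw.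
  rewrite -leq_sqr; nia.
apply: (leq_trans H2); rewrite -[4]/(2 ^ 2) -expnMn leq_sqr; exact: H1.
Qed.
Lemma arith (N SW SD D l C m t : nat) :
  N ^ 2 <= l * SW -> SW <= l * (N + D) -> D <= 4 * t * N + (m - 1) * SD ->
  C ^ 2 * l * SD <= 4 * SW -> 8 * (m - 1) <= C ^ 2 -> 2 * (4 * t + 1) <= C ->
  N <= C * l ^ 2.
Proof.
move=> hg ha hD hf hm hC.
set M := m - 1 in hD hm.
have h1 : SW <= l * ((4 * t + 1) * N) + M * (l * SD).
  apply: (leq_trans ha); nia.
have h2 : C ^ 2 * SW <= C ^ 2 * (l * ((4 * t + 1) * N)) + M * (4 * SW).
  apply: (@leq_trans (C ^ 2 * (l * ((4 * t + 1) * N) + M * (l * SD)))).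
    by rewrite leq_mul2l h1 orbT.
  rewrite mulnDr leq_add2l.
  have : M * (C ^ 2 * l * SD) <= M * (4 * SW) by rewrite leq_mul2l hf orbT.
  nia.
have h3 : M * (4 * SW) * 2 <= C ^ 2 * SW.
  have : 8 * M * SW <= C ^ 2 * SW by rewrite leq_mul2r hm orbT.
  nia.
have h4 : C ^ 2 * SW <= C ^ 2 * (2 * (l * ((4 * t + 1) * N))) by nia.
have h5 : SW <= 2 * (l * ((4 * t + 1) * N)).
  have hC0 : 0 < C ^ 2 by rewrite expn_gt0; lia.
  by rewrite leq_pmul2l in h4.
have h6 : N * N <= N * (C * l ^ 2).
  apply: (@leq_trans (l * SW)); first by rewrite -[N * N]/(N ^ 2).
  apply: (@leq_trans (l * (2 * (l * ((4 * t + 1) * N))))); first by rewrite leq_mul2l h5 orbT.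
  have : 2 * (4 * t + 1) * (l * l * N) <= C * (l * l * N) by rewrite leq_mul2r hC orbT.
  nia.
case: N h6 {hg h1 h2 h3 h4 h5 ha hD} => // N h6.
by rewrite leq_pmul2l in h6.
Qed.

Lemma count_main (T : finType) (R L : {set T}) (S : T -> {set T}) (C m t : nat) :
  (forall z, S z \subset L) ->
  (forall z, z \in R -> C ^ 2 * #|L| <= #|S z| ^ 2) -> 2 <= C ->
  8 * (m - 1) <= C ^ 2 -> 2 * (4 * t + 1) <= C ->
  (forall x y : T, x != y ->
     \sum_z \sum_w (z != w) * (m <= kk R S z w) *
        (Ind R S z x * Ind R S z y * (Ind R S w x * Ind R S w y))
     <= 4 * t * cc R S x y) ->
  NN R S <= C * #|L| ^ 2.
Proof.
move=> hS hbig hC2 hm hC hforb.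
have I0 : forall z x, x \notin L -> Ind R S z x = 0.
  move=> z x hx; rewrite /Ind; case: (z \in R) => //=.
  by case hxz: (x \in S z) => //; move: hx; rewrite (subsetP (hS z) x hxz).
have c0 : forall x y, (x \notin L) || (y \notin L) -> cc R S x y = 0.
  move=> x y /orP [] h; rewrite /cc; apply: big1 => z _.
    by rewrite (I0 z x h).
  by rewrite (I0 z y h) muln0.
have hg : NN R S ^ 2 <= #|L| * \sum_x WW R S x ^ 2.
  apply: cauchy_nat => x hx; rewrite /WW; apply: big1 => y _; by rewrite c0 ?hx ?muln0.
have ha : \sum_x WW R S x ^ 2 <= #|L| *
     (NN R S + \sum_x \sum_y (x != y) * \sum_z \sum_w (z != w) *
      (Ind R S z x * Ind R S z y * (Ind R S w x * Ind R S w y))).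
  rewrite -step_b big_distrr /=; apply: leq_sum => x _.
  apply: cauchy_nat => y hy; by rewrite c0 ?hy ?orbT ?muln0.
have hf : C ^ 2 * #|L| * \sum_x dg R S x ^ 2 <= 4 * \sum_x WW R S x ^ 2.
  rewrite !big_distrr /=; apply: leq_sum => x _; exact: step_f.
exact: (arith hg ha (step_D hforb) hf hm hC).
Qed.

Definition Edg (T : finType) R S (m : nat) (F : {set T}) :=
  \sum_z \sum_w (z \in F) * (w \in F) * ((z != w) && (m <= kk R S z w)).

Lemma sum_prod_card (T : finType) (A B : {set T}) :
  \sum_a \sum_b (a \in A) * (b \in B) = #|A| * #|B|.
Proof.
rewrite card_sumb big_distrl /=; apply: eq_bigr => a _.
rewrite card_sumb big_distrr /=; by apply: eq_bigr.
Qed.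

Lemma Edg_remove (T : finType) R S m (F : {set T}) z w :
  Edg R S m F <= Edg R S m (F :\: [set z; w]) + 4 * #|F|.
Proof.
set P := [set z; w]; set F' := F :\: P.
have pt : forall a b, (a \in F) * (b \in F) * ((a != b) && (m <= kk R S a b)) <=
   (a \in F') * (b \in F') * ((a != b) && (m <= kk R S a b)) +
   ((a \in P) * (b \in F) + (a \in F) * (b \in P)).
  move=> a b; rewrite /F' !in_setD.
  case: (a \in F); case: (b \in F); case: (a \in P); case: (b \in P);
    case: (_ && _) => //.
apply: (@leq_trans (Edg R S m F' + (#|P| * #|F| + #|F| * #|P|))).
  rewrite -!sum_prod_card -big_split /= /Edg -big_split /=.
  apply: leq_sum => a _; rewrite -!big_split /=; apply: leq_sum => b _; exact: pt.
rewrite leq_add2l /P cards2; case: (z != w); lia.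
Qed.

Lemma sum_pos (T : finType) (f : T -> nat) : 0 < \sum_i f i -> exists i, 0 < f i.
Proof.
move=> h; case: (boolP [exists i, 0 < f i]) => [/existsP //|].
rewrite negb_exists => /forallP H.
have : \sum_i f i == 0.
  by rewrite sum_nat_eq0; apply/forallP => i; move: (H i); rewrite lt0n negbK.
by move/eqP=> E; rewrite E in h.
Qed.

Definition config (T : finType) (S : T -> {set T}) (x y : T) (F : {set T})
  (j : nat) (g h : nat * bool -> T) : Prop :=
  [/\ forall i c, i < j -> g (i, c) \in F,
      forall i c d, i < j -> h (i, c) \in S (g (i, d)),
      forall i c, i < j -> (h (i, c) != x) && (h (i, c) != y),
      forall p q, p.1 < j -> q.1 < j -> g p = g q -> p = q &
      forall p q, p.1 < j -> q.1 < j -> h p = h q -> p = q].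

Lemma kk_le (T : finType) R S (z w : T) :
  kk R S z w <= #|[set v | (v \in S z) && (v \in S w)]|.
Proof.
rewrite card_sumb /kk; apply: leq_sum => v _; rewrite /Ind inE.
by case: (z \in R); case: (w \in R); case: (v \in S z); case: (v \in S w).
Qed.

Lemma matching (T : finType) R S (x y : T) m (j : nat) :
  2 * j + 2 <= m -> forall F : {set T}, 4 * j * #|F| < Edg R S m F ->
  exists g h, config S x y F j g h.
Proof.
elim: j => [|j IH] hm F hE.
  by exists (fun _ => x), (fun _ => x); split => // [[i c]] [i' c'].
have [z hz] := sum_pos (leq_ltn_trans (leq0n _) hE).
have [w hw] := sum_pos hz.
move: hw; case zF: (z \in F); case wF: (w \in F); rewrite ?mul0n ?muln0 //.
case: (boolP (z != w)) => //= zw; case: (leqP m (kk R S z w)) => //= hk _.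
set F' := F :\: [set z; w].
have hE' : 4 * j * #|F'| < Edg R S m F'.
  have h1 := Edg_remove R S m F z w.
  have h2 : #|F'| <= #|F| by apply: subset_leq_card; apply: subsetDl.
  have h3 : 4 * j * #|F'| <= 4 * j * #|F| by rewrite leq_mul2l h2 orbT.
  move: hE; rewrite mulnS mulnDl => hE. rewrite -/F' in h1. lia.
have hm' : 2 * j + 2 <= m by lia.
have [g [h [P1 P2 P3 P4 P5]]] := IH hm' F' hE'.
set SS := [set v | (v \in S z) && (v \in S w)].
set Img := (fun p : 'I_j * bool => h (val p.1, p.2)) @: [set: 'I_j * bool].
set B := [set x; y] :|: Img.
have hB : #|B| <= 2 + 2 * j.
  have hI : #|Img| <= 2 * j.
    apply: (leq_trans (leq_imset_card _ _)).
    by rewrite cardsT card_prod card_ord card_bool mulnC.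
  rewrite /B cardsU cards2; case: (x != y); lia.
have hX : 1 < #|SS :\: B|.
  rewrite cardsD.
  have := kk_le R S z w; rewrite -/SS => hS.
  have : #|SS :&: B| <= #|B| by apply: subset_leq_card; apply: subsetIr.
  lia.
have [a [b [aX bX ab]]] : exists a b, [/\ a \in SS :\: B, b \in SS :\: B & a != b].
  by move/card_gt1P: hX => [a [b [? ? ?]]]; exists a, b.
have notImg : forall v, v \notin Img -> forall i c, i < j -> h (i, c) != v.
  move=> v vI i c hi; apply/eqP => E.
  have : h (i, c) \in Img by apply/imsetP; exists (Ordinal hi, c).
  by rewrite E (negbTE vI).
have gF : forall i c, i < j -> [/\ g (i, c) \in F, g (i, c) != z & g (i, c) != w].
  move=> i c hi; have := P1 i c hi; rewrite /F' !inE negb_or => /andP [/andP [h1 h2] h3].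
  by split.
have hab : forall v, v \in SS :\: B ->
    [/\ v \in S z, v \in S w, v != x, v != y & forall i c, i < j -> h (i, c) != v].
  move=> v; rewrite in_setD /B in_setU negb_or /SS inE in_set2 negb_or.
  move=> /andP [/andP [/andP [vx vy] vI] /andP [vz vw]]; split => //; exact: notImg.
have [az aw ax ay ah] := hab a aX.
have [bz bw bx b_y bh] := hab b bX.
exists (fun p => if p.1 == j then (if p.2 then w else z) else g p).
exists (fun p => if p.1 == j then (if p.2 then b else a) else h p).
have ltj : forall i, i < j.+1 -> i != j -> i < j by move=> i hi nij; rewrite ltn_neqAle nij -ltnS.
split.
- move=> i c hi /=; have [eij|nij] := eqVneq i j; first by case: c.
  by have [] := gF i c (ltj i hi nij).
- move=> i c d hi /=; have [eij|nij] := eqVneq i j; first by case: c; case: d.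
  exact: P2 (ltj i hi nij).
- move=> i c hi /=; have [eij|nij] := eqVneq i j; first by case: c; rewrite ?bx ?b_y ?ax ?ay.
  exact: P3 (ltj i hi nij).
- move=> [i c] [i' c'] /= hi hi'.
  have [->|nij] := eqVneq i j; have [->|nij'] := eqVneq i' j; rewrite ?eqxx /=.
  + by case: c; case: c' => // E; move: zw; rewrite E eqxx.
  + have [_ h1 h2] := gF i' c' (ltj i' hi' nij').
    by case: c => E; [move: h2 | move: h1]; rewrite E eqxx.
  + have [_ h1 h2] := gF i c (ltj i hi nij).
    by case: c' => E; [move: h2 | move: h1]; rewrite E eqxx.
  + by move=> E; apply: (P4 (i, c) (i', c')) => //=; [apply: ltj | apply: ltj].
- move=> [i c] [i' c'] /= hi hi'.
  have [->|nij] := eqVneq i j; have [->|nij'] := eqVneq i' j; rewrite ?eqxx /=.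
  + by case: c; case: c' => // E; move: ab; rewrite E eqxx.
  + have h1 := bh i' c' (ltj i' hi' nij'); have h2 := ah i' c' (ltj i' hi' nij').
    by case: c => E; [move: h1 | move: h2]; rewrite E eqxx.
  + have h1 := bh i c (ltj i hi nij); have h2 := ah i c (ltj i hi nij).
    by case: c' => E; [move: h1 | move: h2]; rewrite E eqxx.
  + by move=> E; apply: (P5 (i, c) (i', c')) => //=; [apply: ltj | apply: ltj].
Qed.

Lemma build_theta (T : finType) (e : rel T) (t : nat) (z1 z2 x y : T)
   (R F : {set T}) (g h : nat * bool -> T) : 0 < t ->
  simple_graph e -> bipartite e -> z1 != z2 -> x != y ->
  (forall v, v \in R -> (v != z1) && (v != z2)) ->
  (forall v, v \in F -> [&& v \in R, x \in cnbr3 e v z1 z2 & y \in cnbr3 e v z1 z2]) ->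
  config (fun v => cnbr3 e v z1 z2) x y F t g h ->
  has_copy (@theta3_2 t) e.
Proof.
move=> t0 [esym eirr] [col hcol] z12 xy hR hF [P1 P2 P3 P4 P5].
have eF : forall i c, i < t ->
   [/\ g (i, c) != z1, g (i, c) != z2, e (g (i, c)) x & e (g (i, c)) y].
  move=> i c hi; have := hF _ (P1 i c hi); rewrite !inE => /and3P [hr /and3P [a1 _ _] /and3P [b1 _ _]].
  by have /andP [] := hR _ hr.
have eH : forall i c d, i < t ->
   [/\ e (g (i, d)) (h (i, c)), e z1 (h (i, c)) & e z2 (h (i, c))].
  by move=> i c d hi; have := P2 i c d hi; rewrite !inE => /and3P [].
have ne : forall a b, e a b -> a != b.
  by move=> a b hab; apply/eqP => E; move: hab; rewrite E eirr.
have colg : forall i c, i < t -> col (g (i, c)) = col z1.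
  move=> i c hi; have [h1 h2 _] := eH i c c hi.
  have := hcol _ _ h1; have := hcol _ _ h2.
  by case: (col (g (i, c))); case: (col z1); case: (col (h (i, c))).
have colh : forall i c, i < t -> col (h (i, c)) != col z1.
  move=> i c hi; have [_ h2 _] := eH i c c hi; rewrite eq_sym; exact: hcol.
pose f := fun p : theta_vert t * bool =>
  match p.1 with
  | inl false => if p.2 then z2 else z1
  | inl true => if p.2 then y else x
  | inr (i, false) => h (val i, p.2)
  | inr (i, true) => g (val i, p.2)
  end.
exists f; split; last first.
  move=> [u c] [u' c']; rewrite /theta3_2 /blowup2 /= /f /=.
  case: u => [[]|[i []]]; case: u' => [[]|[i' []]] /=; rewrite ?andbF ?andbT //= => hadj.
  - have [_ _ h3 h4] := eF i' c' (ltn_ord i'); rewrite esym; by case: c.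
  - have [_ h2 h3] := eH i' c' c' (ltn_ord i'); by case: c.
  - have [_ _ h3 h4] := eF i c (ltn_ord i); by case: c'.
  - move: hadj => /eqP ii; subst i'.
    by have [h1 _ _] := eH i c' c (ltn_ord i).
  - have [_ h2 h3] := eH i c c (ltn_ord i); rewrite esym; by case: c'.
  - move: hadj => /eqP ii; subst i'.
    have [h1 _ _] := eH i c c' (ltn_ord i); by rewrite esym.
have [ex1 ex2 ey1 ey2] : [/\ e z1 x, e z2 x, e z1 y & e z2 y].
  have := hF _ (P1 0 false t0); rewrite !inE => /and3P [_ /and3P [_ ? ?] /and3P [_ ? ?]].
  by split.
have colz2 : col z2 = col z1.
  have [_ h1 h2] := eH 0 false false t0.
  have := hcol _ _ h1; have := hcol _ _ h2.
  by case: (col z1); case: (col z2); case: (col (h (0, false))).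
have colx : col x != col z1 by rewrite eq_sym; apply: hcol.
have coly : col y != col z1 by rewrite eq_sym; apply: hcol.
pose kB := fun u : theta_vert t => match u with inl b => b | inr (_, c) => ~~ c end.
have colf : forall p, (col (f p) == col z1) = ~~ kB p.1.
  move=> [[[]|[i []]] c] /=; rewrite /f /=.
  - by case: c; apply/negbTE.
  - by case: c; rewrite ?colz2 eqxx.
  - by rewrite colg ?eqxx.
  - by apply/negbTE; apply: colh.
move=> p q E.
have hk : kB p.1 = kB q.1.
  by apply: negb_inj; rewrite -!colf E.
move: E hk; case: p => [[[]|[i []]] c]; case: q => [[[]|[i' []]] c'];
  rewrite /f /= => E hk; try discriminate hk; clear hk.
- by case: c E; case: c' => // E; move: xy; rewrite ?E eqxx.
- have /andP [n1 n2] := P3 i' c' (ltn_ord i').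
  by case: c E => E; [move: n2 | move: n1]; rewrite -E eqxx.
- by case: c E; case: c' => // E; move: z12; rewrite ?E eqxx.
- have [n1 n2 _ _] := eF i' c' (ltn_ord i').
  by case: c E => E; [move: n2 | move: n1]; rewrite -E eqxx.
- have [n1 n2 _ _] := eF i c (ltn_ord i).
  by case: c' E => E; [move: n2 | move: n1]; rewrite E eqxx.
- by case: (P4 (val i, c) (val i', c') (ltn_ord i) (ltn_ord i') E) => /val_inj -> ->.
- have /andP [n1 n2] := P3 i c (ltn_ord i).
  by case: c' E => E; [move: n2 | move: n1]; rewrite E eqxx.
- by case: (P5 (val i, c) (val i', c') (ltn_ord i) (ltn_ord i') E) => /val_inj -> ->.
Qed.

Lemma hforb_lemma (T : finType) (e : rel T) (t : nat) (z1 z2 : T) (R : {set T}) :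
  0 < t -> simple_graph e -> bipartite e -> ~ has_copy (@theta3_2 t) e ->
  z1 != z2 -> (forall v, v \in R -> (v != z1) && (v != z2)) ->
  forall x y : T, x != y ->
     \sum_z \sum_w (z != w) * (2 * t + 2 <= kk R (fun v => cnbr3 e v z1 z2) z w) *
        (Ind R (fun v => cnbr3 e v z1 z2) z x * Ind R (fun v => cnbr3 e v z1 z2) z y *
         (Ind R (fun v => cnbr3 e v z1 z2) w x * Ind R (fun v => cnbr3 e v z1 z2) w y))
     <= 4 * t * cc R (fun v => cnbr3 e v z1 z2) x y.
Proof.
move=> t0 sg bp noc z12 hR x y xy.
set S := fun v => cnbr3 e v z1 z2.
set F0 := [set z | (z \in R) && (x \in S z) && (y \in S z)].
have -> : \sum_z \sum_w (z != w) * (2 * t + 2 <= kk R S z w) *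
        (Ind R S z x * Ind R S z y * (Ind R S w x * Ind R S w y)) = Edg R S (2 * t + 2) F0.
  rewrite /Edg; apply: eq_bigr => z _; apply: eq_bigr => w _.
  rewrite /Ind /F0 [z \in [set _ | _]]inE [w \in [set _ | _]]inE.
  case: (z \in R); case: (w \in R); case: (x \in S z); case: (y \in S z);
    case: (x \in S w); case: (y \in S w); case: (z != w); case: (_ <= _) => //.
have E2 : cc R S x y = #|F0|.
  rewrite card_sumb /cc; apply: eq_bigr => z _; rewrite /Ind /F0 [z \in [set _ | _]]inE.
  by case: (z \in R); case: (x \in S z); case: (y \in S z).
apply: (@leq_trans (4 * t * #|F0|)); last by rewrite E2.
rewrite leqNgt; apply/negP => hlt.
have [g [h cf]] := @matching T R S x y (2 * t + 2) t (leqnn _) F0 hlt.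
apply: noc; apply: (build_theta t0 sg bp z12 xy hR _ cf).
by move=> v; rewrite !inE => /andP [/andP [-> ->] ->].
Qed.

Theorem mainTheorem6 :
  forall t : nat, 0 < t ->
  exists C : nat,
  forall (T : finType) (e : rel T),
    simple_graph e -> bipartite e -> ~ has_copy (@theta3_2 t) e ->
  forall z1 z2 : T, z1 != z2 ->
  let l := #|cnbr2 e z1 z2| in
  let R := [set v | [&& v != z1, v != z2 &
                       C ^ 2 * l <= #|cnbr3 e v z1 z2| ^ 2]] in
  #|[set p : T * T * T |
      [&& p.1.1 \in R,
          p.1.2 \in cnbr3 e p.1.1 z1 z2,
          p.2 \in cnbr3 e p.1.1 z1 z2,
          p.1.1 != p.1.2, p.1.1 != p.2 & p.1.2 != p.2]]|
    <= C * l ^ 2.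
Proof.
move=> t t0; exists (16 * t) => T e sg bp noc z1 z2 z12.
cbv zeta.
set l := #|cnbr2 e z1 z2|.
set R := [set v | _ ].
set S := fun v => cnbr3 e v z1 z2.
have hR : forall v, v \in R -> (v != z1) && (v != z2).
  by move=> v; rewrite inE => /and3P [-> -> _].
have -> : #|[set p : T * T * T |
      [&& p.1.1 \in R,
          p.1.2 \in cnbr3 e p.1.1 z1 z2,
          p.2 \in cnbr3 e p.1.1 z1 z2,
          p.1.1 != p.1.2, p.1.1 != p.2 & p.1.2 != p.2]]| = NN R S.
  rewrite card_sumb /NN /WW /cc; symmetry.
  under eq_bigr => x _ do under eq_bigr => y _ do rewrite big_distrr /=.
  under eq_bigr => x _ do rewrite exchange_big /=.
  rewrite exchange_big /=.
  rewrite pair_bigA pair_bigA /=.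
  apply: eq_bigr => [[[z x] y]] _ /=.
  rewrite inE /= /Ind /S.
  case: sg => _ irr.
  case hz: (z \in R); case hx: (x \in cnbr3 e z z1 z2); case hy: (y \in cnbr3 e z z1 z2);
    rewrite /= ?muln0 ?mul0n ?muln1 ?andbF //.
  have zx : z != x by apply/eqP => E; move: hx; rewrite E !inE irr.
  have zy : z != y by apply/eqP => E; move: hy; rewrite E !inE irr.
  by rewrite zx zy.
apply: (@count_main T R (cnbr2 e z1 z2) S (16 * t) (2 * t + 2) t).
- by move=> z; apply/subsetP => w; rewrite !inE => /and3P [_ -> ->].
- by move=> z; rewrite inE => /and3P [_ _ ->].
- lia.
- nia.
- lia.
- exact: hforb_lemma.
Qed.
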